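(* Let $\phi$ be a flow of a compact metric space $X$. (1) If $\phi$ is expansive on $X\setminus Sing(\phi)$, then $\phi$ is singular-expansive. (2) If $\phi$ is singular-expansive and $Sing(\phi)$ is open in $X$, then $\phi$ is expansive on $X\setminus Sing(\phi)$.
   Context: A flow is a continuous $\phi:\mathbb{R}\times X\to X$ with $\phi_0=\mathrm{id}$, $\phi_{t+s}=\phi_t\circ\phi_s$; $\phi_I(x)=\{\phi_t(x):t\in I\}$; $Sing(\phi)$ is the set of fixed points; $dist(z,A)=\inf_{a\in A}d(z,a)$, with $dist(z,\emptyset)=diam(X)$. $\phi$ is expansive on $\Lambda\subset X$ if for every $\epsilon>0$ there is $\delta>0$ such that whenever $x,y\in\Lambda$ and a continuous $s:\mathbb{R}\to\mathbb{R}$ with $s(0)=0$ satisfy $d(\phi_t(x),\phi_{s(t)}(y))\le\delta$ for all $t$, then $y\in\phi_{[-\epsilon,\epsilon]}(x)$. $\phi$ is singular-expansive if for every $\epsilon>0$ there is $\delta>0$ such that whenever $x,y\in X$ and an increasing homeomorphism $s:\mathbb{R}\to\mathbb{R}$ satisfy $d(\phi_t(x),\phi_{s(t)}(y))\le\delta\,dist(\phi_t(x),Sing(\phi))$ for all $t$, then $\phi_{s(t_0)}(y)\in\phi_{[t_0-\epsilon,t_0+\epsilon]}(x)$ for some $t_0\in\mathbb{R}$. *)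

(* Defs.v *)
From Stdlib Require Import Reals List ClassicalEpsilon.
From Coquelicot Require Import Coquelicot.
Open Scope R_scope.

Definition is_metric {X : Type} (d : X -> X -> R) : Prop :=
  (forall x y, 0 <= d x y) /\
  (forall x y, d x y = 0 <-> x = y) /\
  (forall x y, d x y = d y x) /\
  (forall x y z, d x z <= d x y + d y z).

Definition metric_open {X : Type} (d : X -> X -> R) (U : X -> Prop) : Prop :=
  forall x, U x -> exists r, 0 < r /\ forall y, d x y < r -> U y.

Definition metric_compact {X : Type} (d : X -> X -> R) : Prop :=
  forall (I : Type) (U : I -> X -> Prop),
    (forall i, metric_open d (U i)) ->
    (forall x, exists i, U i x) ->
    exists l : list I, forall x, exists i, In i l /\ U i x.

Definition flow_continuous {X : Type} (d : X -> X -> R) (phi : R -> X -> X) : Prop :=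
  forall t x eps, 0 < eps -> exists delta, 0 < delta /\
    forall s y, Rabs (s - t) < delta -> d x y < delta ->
      d (phi t x) (phi s y) < eps.

Definition is_flow {X : Type} (d : X -> X -> R) (phi : R -> X -> X) : Prop :=
  flow_continuous d phi /\
  (forall x, phi 0 x = x) /\
  (forall t s x, phi (t + s) x = phi t (phi s x)).

Definition Sing {X : Type} (phi : R -> X -> X) : X -> Prop :=
  fun x => forall t, phi t x = x.

Definition in_orbit_segment {X : Type} (phi : R -> X -> X) (a b : R) (x y : X) : Prop :=
  exists u, a <= u <= b /\ y = phi u x.

Definition diam {X : Type} (d : X -> X -> R) : R :=
  real (Lub_Rbar (fun r => exists x y, r = d x y)).

(* dist(z,A) = inf_{a in A} d(z,a), and dist(z, emptyset) = diam(X). *)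
Definition dist {X : Type} (d : X -> X -> R) (z : X) (A : X -> Prop) : R :=
  if excluded_middle_informative (exists a, A a)
  then real (Glb_Rbar (fun r => exists a, A a /\ r = d z a))
  else diam d.

Definition increasing_homeo (s : R -> R) : Prop :=
  (forall a b, a < b -> s a < s b) /\
  continuity s /\
  exists g : R -> R, continuity g /\ (forall t, g (s t) = t) /\ (forall t, s (g t) = t).

Definition expansive_on {X : Type} (d : X -> X -> R) (phi : R -> X -> X)
    (Lambda : X -> Prop) : Prop :=
  forall eps, 0 < eps -> exists delta, 0 < delta /\
    forall x y (s : R -> R), Lambda x -> Lambda y ->
      continuity s -> s 0 = 0 ->
      (forall t, d (phi t x) (phi (s t) y) <= delta) ->
      in_orbit_segment phi (- eps) eps x y.

Definition singular_expansive {X : Type} (d : X -> X -> R) (phi : R -> X -> X) : Prop :=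
  forall eps, 0 < eps -> exists delta, 0 < delta /\
    forall x y (s : R -> R), increasing_homeo s ->
      (forall t, d (phi t x) (phi (s t) y) <= delta * dist d (phi t x) (Sing phi)) ->
      exists t0, in_orbit_segment phi (t0 - eps) (t0 + eps) x (phi (s t0) y).

(* Main.v *)
Require Import Defs.
From Stdlib Require Import Reals Lra List ClassicalEpsilon Classical.
From Coquelicot Require Import Coquelicot.
Open Scope R_scope.

Lemma glb_bounds (E : R -> Prop) c e : (forall x, E x -> c <= x) -> E e ->
  c <= real (Glb_Rbar E) <= e.
Proof.
  intros Hc He. destruct (Glb_Rbar_correct E) as [H1 H2].
  assert (A : Rbar_le (Glb_Rbar E) e) by (apply H1; auto).
  assert (B : Rbar_le c (Glb_Rbar E)) by (apply H2; intros x Hx; simpl; apply Hc; auto).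
  destruct (Glb_Rbar E); simpl in *; try contradiction; lra.
Qed.
Lemma lub_bounds (E : R -> Prop) M e : (forall x, E x -> x <= M) -> E e ->
  e <= real (Lub_Rbar E) <= M.
Proof.
  intros Hc He. destruct (Lub_Rbar_correct E) as [H1 H2].
  assert (A : Rbar_le e (Lub_Rbar E)) by (apply H1; auto).
  assert (B : Rbar_le (Lub_Rbar E) M) by (apply H2; intros x Hx; simpl; apply Hc; auto).
  destruct (Lub_Rbar E); simpl in *; try contradiction; lra.
Qed.


Lemma ivt_gen (f : R -> R) a b c : continuity f -> (f a - c) * (f b - c) <= 0 ->
  exists t, Rmin a b <= t <= Rmax a b /\ f t = c.
Proof.
  intros Hf H. assert (Hg : continuity (fun x => f x - c)).
  { apply continuity_minus; auto. apply continuity_const. intros x y; auto. }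
  destruct (Rle_or_lt a b) as [Hab|Hab].
  - destruct (IVT_cor _ a b Hg Hab H) as [t [Ht Ht']]. exists t.
    rewrite Rmin_left, Rmax_right by lra. split; auto. lra.
  - destruct (IVT_cor _ b a Hg (Rlt_le _ _ Hab)) as [t [Ht Ht']]. lra.
    exists t. rewrite Rmin_right, Rmax_left by lra. split; auto. lra.
Qed.

Lemma barrier (g : R -> R) a t0 t1 : continuity g -> 0 < a -> Rabs (g t0) < a ->
  (forall t, Rmin t0 t1 <= t <= Rmax t0 t1 -> ~ (a <= Rabs (g t) <= 3 * a)) ->
  Rabs (g t1) < a.
Proof.
  intros Hg Ha H0 H. destruct (Rlt_or_le (Rabs (g t1)) a) as [L|L]; auto. exfalso.
  assert (L2 : 3 * a < Rabs (g t1)).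
  { destruct (Rlt_or_le (3*a) (Rabs (g t1))); auto. exfalso. eapply H.
    2: split; eauto. split. apply Rmin_r. apply Rmax_r. }
  apply Rabs_def2 in H0. destruct H0 as [H0a H0b].
  destruct (Rle_or_lt 0 (g t1)) as [P|P].
  - rewrite Rabs_right in L2 by lra.
    destruct (ivt_gen g t0 t1 (2*a)) as [t [Ht Ht']]; auto. nra.
    apply (H t Ht). rewrite Ht', Rabs_right; lra.
  - rewrite Rabs_left in L2 by lra.
    destruct (ivt_gen g t0 t1 (-(2*a))) as [t [Ht Ht']]; auto. nra.
    apply (H t Ht). rewrite Ht', Rabs_left; lra.
Qed.

Lemma homeo_of_lin (f : R -> R) k : continuity f -> 0 < k ->
  (forall a b, a <= b -> k * (b - a) <= f b - f a) -> increasing_homeo f.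
Proof.
  intros Hf Hk Hlin.
  assert (Hinj : forall a b, f a = f b -> a = b).
  { intros a b E. destruct (Rtotal_order a b) as [L|[L|L]]; auto.
    pose proof (Hlin a b (Rlt_le _ _ L)). nra. pose proof (Hlin b a (Rlt_le _ _ L)). nra. }
  assert (Hsurj : forall y, exists t, f t = y).
  { intros y. set (A := - Rabs (y - f 0) / k - 1). set (B := Rabs (y - f 0) / k + 1).
    assert (HA : f A < y).
    { pose proof (Hlin A 0). assert (A <= 0). { unfold A.
        assert (0 <= Rabs (y - f 0) / k) by (apply Rdiv_le_0_compat; [apply Rabs_pos|lra]). lra. }
      assert (k * (0 - A) = Rabs (y - f 0) + k) by (unfold A; field; lra).
      pose proof (Rle_abs (f 0 - y)). rewrite Rabs_minus_sym in H2. nra. }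
    assert (HB : y < f B).
    { pose proof (Hlin 0 B). assert (0 <= B). { unfold B.
        assert (0 <= Rabs (y - f 0) / k) by (apply Rdiv_le_0_compat; [apply Rabs_pos|lra]). lra. }
      assert (k * (B - 0) = Rabs (y - f 0) + k) by (unfold B; field; lra).
      pose proof (Rle_abs (y - f 0)). nra. }
    destruct (ivt_gen f A B y Hf) as [t [_ Ht]]. nra. eauto. }
  split. { intros a b L. pose proof (Hlin a b (Rlt_le _ _ L)). nra. }
  split; auto.
  exists (fun y => proj1_sig (constructive_indefinite_description _ (Hsurj y))).
  assert (Hg : forall y, f (proj1_sig (constructive_indefinite_description _ (Hsurj y))) = y).
  { intros y. destruct (constructive_indefinite_description _ (Hsurj y)); auto. }
  split; [|split].
  - intros y0. set (g := fun y => proj1_sig (constructive_indefinite_description _ (Hsurj y))).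
    assert (Lip : forall y1 y2, Rabs (g y1 - g y2) <= Rabs (y1 - y2) / k).
    { intros y1 y2.
      assert (Hg' : forall y, f (g y) = y) by (intros; apply Hg).
      assert (K : Rabs (g y1 - g y2) * k <= Rabs (f (g y1) - f (g y2))).
      { destruct (Rle_or_lt (g y1) (g y2)) as [L|L].
        - pose proof (Hlin _ _ L). rewrite Rabs_left1 by lra. rewrite Rabs_left1 by nra. nra.
        - pose proof (Hlin _ _ (Rlt_le _ _ L)). rewrite Rabs_right by lra.
          rewrite Rabs_right by nra. nra. }
      rewrite !Hg' in K.
      apply Rmult_le_reg_r with k. lra. unfold Rdiv. rewrite Rmult_assoc, Rinv_l by lra. lra. }
    intros e He. exists (e * k). split. nra. intros y [_ Hy]. simpl in *. unfold R_dist in *.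
    eapply Rle_lt_trans. apply Lip. apply Rmult_lt_reg_r with k. lra.
    unfold Rdiv. rewrite Rmult_assoc, Rinv_l by lra. lra.
  - intros t. apply Hinj. rewrite Hg. auto.
  - intros t. apply Hg.
Qed.

Lemma cont_of_derive (f : R -> R) df x : is_derive f x df -> continuity_pt f x.
Proof.
  intros H. apply continuity_pt_filterlim. apply (ex_derive_continuous f x). exists df; exact H.
Qed.

Lemma avg_props (s : R -> R) u0 : continuity s -> 0 < u0 ->
  continuity (fun t => (RInt s 0 (t+u0) - RInt s 0 t)/u0) /\
  (forall t, exists c, t <= c <= t + u0 /\ (RInt s 0 (t+u0) - RInt s 0 t)/u0 = s c) /\
  (forall a b, a <= b -> exists c, a <= c <= b /\
     (RInt s 0 (b+u0) - RInt s 0 b)/u0 - (RInt s 0 (a+u0) - RInt s 0 a)/u0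
     = (s (c+u0) - s c)/u0 * (b - a)).
Proof.
  intros Hs Hu.
  set (I := fun x => RInt s 0 x).
  assert (HI : forall x, is_derive I x (s x)).
  { intros x. apply (is_derive_RInt s I 0 x).
    - apply filter_forall. intros b. unfold I. apply (RInt_correct (V:=R_CompleteNormedModule)). apply ex_RInt_continuous.
      intros z _. apply continuity_pt_filterlim. apply Hs.
    - apply continuity_pt_filterlim. apply Hs. }
  set (J := fun t => I (t + u0) - I t).
  assert (HJ : forall t, is_derive J t (s (t+u0) - s t)).
  { intros t. unfold J. apply (is_derive_minus (fun t => I (t+u0)) I t).
    - assert (H1 : is_derive (fun t => t + u0) t 1) by (auto_derive; auto; ring).
      pose proof (is_derive_comp I (fun t => t + u0) t _ _ (HI (t+u0)) H1) as H2.
      replace (s (t+u0)) with (scal 1 (s (t + u0))). exact H2.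
      unfold scal; simpl; unfold mult; simpl; ring.
    - apply HI. }
  split; [|split].
  - intros t. change (continuity_pt (fun t => J t / u0) t).
    apply continuity_pt_div. apply (cont_of_derive _ _ _ (HJ t)).
    apply continuity_pt_const. intros a b; auto. lra.
  - intros t. destruct (MVT_gen I t (t+u0) s) as [c [Hc Hc']].
    + intros x _. apply HI.
    + intros x _. apply (cont_of_derive _ _ _ (HI x)).
    + rewrite Rmin_left, Rmax_right in Hc by lra. exists c. split; auto.
      change ((I (t+u0) - I t)/u0 = s c). rewrite Hc'. field. lra.
  - intros a b Hab. destruct (MVT_gen J a b (fun t => s (t+u0) - s t)) as [c [Hc Hc']].
    + intros x _. apply HJ.
    + intros x _. apply (cont_of_derive _ _ _ (HJ x)).
    + rewrite Rmin_left, Rmax_right in Hc by lra. exists c. split; auto.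
      change (J b / u0 - J a / u0 = (s (c + u0) - s c) / u0 * (b - a)).
      replace (J b / u0 - J a / u0) with ((J b - J a)/u0) by (field; lra).
      rewrite Hc'. field. lra.
Qed.

Section Basics.
Variable X : Type.
Variable d : X -> X -> R.
Variable phi : R -> X -> X.
Hypothesis Hd : is_metric d.
Hypothesis Hc : metric_compact d.
Hypothesis Hphi : is_flow d phi.

Lemma d_nn x y : 0 <= d x y. Proof. apply Hd. Qed.
Lemma d_eq x y : d x y = 0 -> x = y. Proof. apply Hd. Qed.
Lemma d_xx x : d x x = 0. Proof. apply Hd. reflexivity. Qed.
Lemma d_sym x y : d x y = d y x. Proof. apply Hd. Qed.
Lemma d_tri x y z : d x z <= d x y + d y z. Proof. apply Hd. Qed.

Lemma phi0 x : phi 0 x = x. Proof. apply Hphi. Qed.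
Lemma phiA t s x : phi (t + s) x = phi t (phi s x). Proof. apply Hphi. Qed.
Lemma phi_inv t x : phi (-t) (phi t x) = x.
Proof. rewrite <- phiA. replace (-t+t) with 0 by ring. apply phi0. Qed.
Lemma phi_inv' t x : phi t (phi (-t) x) = x.
Proof. rewrite <- phiA. replace (t+-t) with 0 by ring. apply phi0. Qed.

Lemma nonsing_inv t x : ~ Sing phi x -> ~ Sing phi (phi t x).
Proof.
  intros H HS. apply H. intro u.
  rewrite <- (phi_inv t x) at 1. rewrite <- phiA.
  replace (u + -t) with (-t + u) by ring. rewrite phiA, HS. apply phi_inv.
Qed.

Lemma finite_min (P : X -> R -> Prop) (l : list X) :
  (forall x m m', 0 < m' <= m -> P x m -> P x m') ->
  (forall x, In x l -> exists m, 0 < m /\ P x m) ->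
  exists m, 0 < m /\ forall x, In x l -> P x m.
Proof.
  intros Hm. induction l as [|a l IH]; intros H.
  - exists 1. split. lra. intros x [].
  - destruct (H a (or_introl eq_refl)) as [ma [Hma Pa]].
    destruct IH as [m [Hm0 Pm]]. { intros x Hx. apply H. right. exact Hx. }
    exists (Rmin ma m). split. apply Rmin_glb_lt; lra.
    intros x [<-|Hx].
    + apply Hm with ma. split. apply Rmin_glb_lt; lra. apply Rmin_l. exact Pa.
    + apply Hm with m. split. apply Rmin_glb_lt; lra. apply Rmin_r. apply Pm, Hx.
Qed.

Lemma cover_ball (S : X -> Prop) (rho : X -> R) :
  metric_open d S -> (forall x, ~ S x -> 0 < rho x) ->
  exists l : list X, (forall x, In x l -> ~ S x) /\
    forall z, S z \/ exists x, In x l /\ d x z < rho x.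
Proof.
  intros HS Hr.
  set (U := fun x w => S w \/ (~ S x /\ d x w < rho x)).
  destruct (Hc X U) as [l Hl].
  - intros x w [Hw|[Hx Hw]].
    + destruct (HS w Hw) as [r [Hr0 Hr1]]. exists r. split; auto.
      intros y Hy. left. auto.
    + exists (rho x - d x w). split. lra. intros y Hy. right. split; auto.
      pose proof (d_tri x w y). lra.
  - intros x. destruct (classic (S x)) as [H|H].
    + exists x. left. exact H.
    + exists x. right. split; auto. rewrite d_xx. apply Hr, H.
  - exists (filter (fun x => if excluded_middle_informative (S x) then false else true) l).
    split.
    + intros x Hx. apply filter_In in Hx. destruct Hx as [_ Hx].
      destruct (excluded_middle_informative (S x)); congruence.
    + intros z. destruct (Hl z) as [i [Hi [Hz|[Hni Hz]]]]. left; auto.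
      right. exists i. split; auto. apply filter_In. split; auto.
      destruct (excluded_middle_informative (S i)); tauto.
Qed.


Lemma choiceR (P : X -> R -> Prop) :
  (forall x, exists r, 0 < r /\ P x r) -> exists f : X -> R, forall x, 0 < f x /\ P x (f x).
Proof.
  intros H. exists (fun x => proj1_sig (constructive_indefinite_description _ (H x))).
  intros x. destruct (constructive_indefinite_description _ (H x)) as [r Hr]. exact Hr.
Qed.

Lemma UCt t0 g : 0 < g -> exists b, 0 < b /\ forall z w r,
  d z w < b -> Rabs (r - t0) < b -> d (phi t0 z) (phi r w) < g.
Proof.
  intros Hg.
  destruct (choiceR (fun x dx => forall s y, Rabs (s - t0) < dx -> d x y < dx ->
     d (phi t0 x) (phi s y) < g/2)) as [f Hf].
  { intros x. destruct Hphi as [Hcont _]. apply (Hcont t0 x (g/2)). lra. }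
  destruct (cover_ball (fun _ => False) (fun x => f x / 2)) as [l [_ Hl]].
  { intros x []. } { intros x _. specialize (Hf x). lra. }
  destruct (finite_min (fun x m => m <= f x / 2) l) as [b [Hb Hbl]].
  { intros; lra. } { intros x _. exists (f x / 2). specialize (Hf x). split; lra. }
  exists b. split; auto. intros z w r Hzw Hr.
  destruct (Hl z) as [[]|[x [Hx Hxz]]].
  specialize (Hbl x Hx). destruct (Hf x) as [Hfx Hfx'].
  pose proof (d_tri x z w).
  assert (H1 : d (phi t0 x) (phi r w) < g/2) by (apply Hfx'; lra).
  assert (H2 : d (phi t0 x) (phi t0 z) < g/2).
  { apply Hfx'. rewrite Rminus_diag, Rabs_R0. lra. lra. }
  pose proof (d_tri (phi t0 z) (phi t0 x) (phi r w)). rewrite d_sym in H2. lra.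
Qed.

Lemma Lsmall g : 0 < g -> exists b, 0 < b /\ forall z w r,
  d z w < b -> Rabs r < b -> d z (phi r w) < g.
Proof.
  intros Hg. destruct (UCt 0 g Hg) as [b [Hb H]]. exists b. split; auto.
  intros z w r H1 H2. rewrite <- (phi0 z). apply H; auto. rewrite Rminus_0_r. auto.
Qed.

Lemma UCT T g : 0 < g -> exists b, 0 < b /\ forall z w r,
  Rabs r <= T -> d z w < b -> d (phi r z) (phi r w) < g.
Proof.
  intros Hg.
  assert (Hex : forall t, exists b, 0 < b /\ forall z w r,
    d z w < b -> Rabs (r - t) < b -> d (phi t z) (phi r w) < g/2).
  { intros t. apply UCt. lra. }
  assert (Hf : exists f : R -> posreal, forall t z w r,
    d z w < f t -> Rabs (r - t) < f t -> d (phi t z) (phi r w) < g/2).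
  { exists (fun t => let H := constructive_indefinite_description _ (Hex t) in
      mkposreal (proj1_sig H) (proj1 (proj2_sig H))).
    intros t. simpl. destruct (constructive_indefinite_description _ (Hex t)) as [b [Hb H]].
    simpl. exact H. }
  destruct Hf as [f Hf].
  destruct (compactness_value_1d (-T) T f) as [b Hb].
  exists b. split. apply cond_pos. intros z w r Hr Hzw.
  apply Rabs_le_between in Hr.
  specialize (Hb r Hr). apply NNPP in Hb. destruct Hb as [t [_ [Hrt Hbt]]].
  assert (H1 : d (phi t z) (phi r z) < g/2). { apply Hf. rewrite d_xx. apply cond_pos. exact Hrt. }
  assert (H2 : d (phi t z) (phi r w) < g/2). { apply Hf. lra. exact Hrt. }
  pose proof (d_tri (phi r z) (phi t z) (phi r w)). rewrite d_sym in H1. lra.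
Qed.


Lemma bounded : exists M, 0 <= M /\ forall a b, d a b <= M.
Proof.
  destruct (cover_ball (fun _ => False) (fun _ => 1)) as [l [_ Hl]].
  { intros x []. } { intros; lra. }
  destruct l as [|x0 l].
  - exists 0. split. lra. intros a b. destruct (Hl a) as [[]|[x [[] _]]].
  - assert (HM : exists M, forall x, In x (x0 :: l) -> d x0 x <= M).
    { clear Hl. induction (x0 :: l) as [|a l' IH]. exists 0. intros x [].
      destruct IH as [M HM]. exists (Rmax M (d x0 a)). intros x [<-|Hx].
      apply Rmax_r. eapply Rle_trans. apply HM, Hx. apply Rmax_l. }
    destruct HM as [M HM]. exists (2 * Rmax M 0 + 2). split.
    pose proof (Rmax_r M 0). lra.
    intros a b.
    destruct (Hl a) as [[]|[xa [Ha Hda]]]. destruct (Hl b) as [[]|[xb [Hb Hdb]]].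
    pose proof (HM _ Ha). pose proof (HM _ Hb). pose proof (Rmax_l M 0).
    pose proof (d_tri a xa b). pose proof (d_tri xa x0 b). pose proof (d_tri x0 xb b).
    rewrite (d_sym a xa) in *. rewrite (d_sym xa x0) in *. lra.
Qed.

Lemma diam_ge a b : d a b <= diam d.
Proof.
  destruct bounded as [M [HM0 HM]]. unfold diam.
  apply (lub_bounds _ M (d a b)). intros r [x [y ->]]. apply HM. exists a, b. auto.
Qed.

Lemma dist_le z a : Sing phi a -> Defs.dist d z (Sing phi) <= d z a.
Proof.
  intros Ha. unfold Defs.dist. destruct (excluded_middle_informative _) as [_|n].
  - apply (glb_bounds _ 0). intros r [b [_ ->]]. apply d_nn. exists a; auto.
  - exfalso; apply n; exists a; auto.
Qed.

Lemma dist_ge z c : (exists a, Sing phi a) -> (forall a, Sing phi a -> c <= d z a) ->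
  c <= Defs.dist d z (Sing phi).
Proof.
  intros [a Ha] H. unfold Defs.dist. destruct (excluded_middle_informative _) as [_|n].
  - apply (glb_bounds _ c (d z a)). intros r [b [Hb ->]]. auto. exists a; auto.
  - exfalso; apply n; exists a; auto.
Qed.

Lemma dist_bound : exists M, 0 <= M /\ forall z, Defs.dist d z (Sing phi) <= M.
Proof.
  destruct bounded as [M [HM0 HM]]. exists M. split; auto. intros z. unfold Defs.dist.
  destruct (excluded_middle_informative _) as [[a Ha]|n].
  - eapply Rle_trans. apply (glb_bounds _ 0 (d z a)). intros r [b [_ ->]]. apply d_nn.
    exists a; auto. auto.
  - unfold diam. apply (lub_bounds _ M (d z z)). intros r [x [y ->]]. apply HM.
    exists z, z. auto.
Qed.


Lemma part1 : expansive_on d phi (fun x => ~ Sing phi x) -> singular_expansive d phi.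
Proof.
  intros HE eps Heps. destruct (HE eps Heps) as [dE [HdE HE']].
  destruct dist_bound as [M [HM0 HM]].
  set (del := Rmin (1/2) (dE/(M+1))).
  assert (Hdel0 : 0 < del). { apply Rmin_glb_lt. lra. apply Rdiv_lt_0_compat; lra. }
  assert (Hdel1 : del <= 1/2) by apply Rmin_l.
  assert (Hdel2 : del * M <= dE).
  { assert (del <= dE/(M+1)) by apply Rmin_r.
    apply Rle_trans with (dE / (M+1) * M). apply Rmult_le_compat_r; lra.
    replace (dE / (M+1) * M) with (dE * (M / (M+1))) by (field; lra).
    rewrite <- (Rmult_1_r dE) at 2.
    apply Rmult_le_compat_l. lra. apply Rmult_le_reg_r with (M+1). lra.
    replace (M / (M+1) * (M+1)) with M by (field; lra). lra. }
  exists del. split; auto.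
  intros x y s [Hinc [Hcs _]] Hclose. exists 0.
  destruct (classic (Sing phi x)) as [Sx|Nx].
  - specialize (Hclose 0). rewrite phi0 in Hclose.
    pose proof (dist_le x x Sx) as H1. rewrite d_xx in H1.
    assert (H2 : d x (phi (s 0) y) <= 0).
    { eapply Rle_trans. apply Hclose. rewrite <- (Rmult_0_r del).
      apply Rmult_le_compat_l; lra. }
    pose proof (d_nn x (phi (s 0) y)).
    assert (E : x = phi (s 0) y) by (apply d_eq; lra).
    exists 0. split. lra. rewrite phi0. auto.
  - set (y' := phi (s 0) y).
    destruct (classic (Sing phi y')) as [Sy|Ny].
    + exfalso. specialize (Hclose 0). rewrite phi0 in Hclose.
      pose proof (dist_le x y' Sy) as H1.
      assert (H2 : d x y' <= del * d x y').
      { eapply Rle_trans. apply Hclose. apply Rmult_le_compat_l; lra. }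
      pose proof (d_nn x y').
      assert (E : x = y') by (apply d_eq; nra). apply Nx. rewrite E. exact Sy.
    + destruct (HE' x y' (fun t => s t - s 0) Nx Ny) as [u [Hu Hu']].
      * apply continuity_minus. exact Hcs. apply continuity_const. intros a b; auto.
      * simpl. ring.
      * intros t. unfold y'. rewrite <- phiA. replace (s t - s 0 + s 0) with (s t) by ring.
        eapply Rle_trans. apply Hclose. eapply Rle_trans. 2: apply Hdel2.
        apply Rmult_le_compat_l. lra. apply HM.
      * exists u. split. lra. exact Hu'.
Qed.


Lemma nonsing_pos x : ~ Sing phi x -> exists T, 0 < T /\ phi T x <> x.
Proof.
  intros H. unfold Sing in H. apply not_all_ex_not in H. destruct H as [t Ht].
  destruct (Rtotal_order t 0) as [Hl|[He|Hg]].
  - exists (-t). split. lra. intro E. apply Ht.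
    transitivity (phi t (phi (-t) x)). rewrite E; reflexivity. apply phi_inv'.
  - subst. exfalso. apply Ht. apply phi0.
  - exists t. auto.
Qed.

Lemma sing_closed x : ~ Sing phi x -> exists r, 0 < r /\ forall a, Sing phi a -> r <= d x a.
Proof.
  intros Hx. destruct (nonsing_pos x Hx) as [T [HT HTx]].
  set (D := d x (phi T x)).
  assert (HD : 0 < D). { pose proof (d_nn x (phi T x)). destruct (Req_dec D 0) as [E|E].
    exfalso. apply HTx. symmetry. apply d_eq. exact E. unfold D in *. lra. }
  destruct (UCt T (D/3)) as [b [Hb Hb']]. lra.
  exists (Rmin b (D/3)). split. apply Rmin_glb_lt; lra.
  intros a Ha. destruct (Rle_lt_dec (Rmin b (D/3)) (d x a)) as [H|H]; auto. exfalso.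
  assert (H1 : d (phi T x) (phi T a) < D/3).
  { apply Hb'. eapply Rlt_le_trans. apply H. apply Rmin_l. rewrite Rminus_diag, Rabs_R0. auto. }
  rewrite (Ha T) in H1. pose proof (Rmin_r b (D/3)).
  pose proof (d_tri x a (phi T x)). rewrite (d_sym a) in *. unfold D in *. lra.
Qed.

Lemma c_lower : metric_open d (Sing phi) -> (exists z, ~ Sing phi z) ->
  exists c, 0 < c /\ forall z, ~ Sing phi z -> c <= Defs.dist d z (Sing phi).
Proof.
  intros Hop [z0 Hz0].
  destruct (classic (exists a, Sing phi a)) as [Hne|Hem].
  - destruct (choiceR (fun x r => ~ Sing phi x -> forall a, Sing phi a -> r <= d x a))
      as [rho Hrho].
    { intros x. destruct (classic (Sing phi x)) as [S|S].
      exists 1. split. lra. tauto.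
      destruct (sing_closed x S) as [r [Hr Hr']]. exists r. auto. }
    destruct (cover_ball (Sing phi) (fun x => rho x / 2)) as [l [Hl1 Hl2]]; auto.
    { intros x _. specialize (Hrho x). lra. }
    destruct (finite_min (fun x m => m <= rho x / 2) l) as [c [Hc0 Hcl]].
    { intros; lra. } { intros x _. exists (rho x / 2). specialize (Hrho x). split; lra. }
    exists c. split; auto. intros z Hz. apply dist_ge; auto.
    intros a Ha. destruct (Hl2 z) as [S|[x [Hx Hxz]]]. contradiction.
    pose proof (proj2 (Hrho x) (Hl1 x Hx) a Ha). pose proof (Hcl x Hx).
    pose proof (d_tri x z a). lra.
  - destruct (nonsing_pos z0 Hz0) as [T [HT HTx]].
    exists (d z0 (phi T z0)). split.
    { pose proof (d_nn z0 (phi T z0)). destruct (Req_dec (d z0 (phi T z0)) 0) as [E|E].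
      exfalso. apply HTx. symmetry. apply d_eq. exact E. lra. }
    intros z _. unfold Defs.dist. destruct (excluded_middle_informative _) as [e|_].
    contradiction. apply diam_ge.
Qed.

Lemma P_local x : ~ Sing phi x -> exists rho, 0 < rho /\ exists hx, 0 < hx /\
  forall h, 0 < h <= hx -> exists al, 0 < al /\ forall w, d x w < rho ->
  forall r, h <= r <= 3 * h -> al <= d w (phi r w).
Proof.
  intros Hx. destruct (nonsing_pos x Hx) as [T [HT HTx]].
  set (D := d x (phi T x)).
  assert (HD : 0 < D). { pose proof (d_nn x (phi T x)). destruct (Req_dec D 0) as [E|E].
    exfalso. apply HTx. symmetry. apply d_eq. exact E. unfold D in *. lra. }
  destruct (UCt T (D/3)) as [b [Hb Hb']]. lra.
  exists (Rmin b (D/3)). split. apply Rmin_glb_lt; lra.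
  destruct (Lsmall (D/9)) as [bL [HbL HbL']]. lra.
  exists (bL/4). split. lra. intros h [Hh0 Hh1].
  set (g0 := D / (9 * (T/h + 1))).
  assert (Hg0 : 0 < g0). { unfold g0. apply Rdiv_lt_0_compat. lra.
    assert (0 < T/h) by (apply Rdiv_lt_0_compat; lra). lra. }
  destruct (UCT T g0 Hg0) as [bU [HbU HbU']].
  exists bU. split; auto. intros w Hw r Hr.
  destruct (Rle_lt_dec bU (d w (phi r w))) as [H|H]; auto. exfalso.
  assert (HwT : D/3 <= d w (phi T w)).
  { assert (H1 : d (phi T x) (phi T w) < D/3).
    { apply Hb'. eapply Rlt_le_trans. apply Hw. apply Rmin_l. rewrite Rminus_diag, Rabs_R0. auto. }
    pose proof (Rmin_r b (D/3)). pose proof (d_tri x w (phi T x)).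
    pose proof (d_tri w (phi T w) (phi T x)). rewrite (d_sym (phi T w)) in *.
    unfold D in *. lra. }
  assert (Hind : forall j : nat, INR j * r <= T -> d w (phi (INR j * r) w) <= INR j * g0).
  { induction j as [|j IH]; intros Hj.
    - simpl. rewrite Rmult_0_l, phi0, d_xx. lra.
    - rewrite S_INR in *. assert (Hj' : INR j * r <= T) by nra.
      specialize (IH Hj').
      assert (E : phi ((INR j + 1) * r) w = phi (INR j * r) (phi r w)).
      { rewrite <- phiA. f_equal. ring. }
      assert (H2 : d (phi (INR j * r) w) (phi (INR j * r) (phi r w)) < g0).
      { apply HbU'. rewrite Rabs_right. lra. pose proof (pos_INR j). nra. auto. }
      rewrite E. pose proof (d_tri w (phi (INR j * r) w) (phi (INR j * r) (phi r w))). lra. }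
  assert (Hr0 : 0 < r) by lra.
  destruct (nfloor_ex (T / r)) as [k Hk]. { apply Rlt_le, Rdiv_lt_0_compat; lra. }
  assert (Hk1 : INR k * r <= T).
  { apply Rmult_le_reg_r with (/r). apply Rinv_0_lt_compat; lra.
    rewrite Rmult_assoc, Rinv_r by lra. unfold Rdiv in Hk. lra. }
  assert (Hk2 : T < (INR k + 1) * r).
  { apply Rmult_lt_reg_r with (/r). apply Rinv_0_lt_compat; lra.
    rewrite Rmult_assoc, Rinv_r by lra. unfold Rdiv in Hk. lra. }
  specialize (Hind k Hk1).
  set (w' := phi (INR k * r) w).
  assert (E : phi T w = phi (T - INR k * r) w').
  { unfold w'. rewrite <- phiA. f_equal. ring. }
  assert (H3 : d w' (phi (T - INR k * r) w') < D/9).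
  { apply HbL'. rewrite d_xx. auto. rewrite Rabs_right by lra. lra. }
  assert (Hkg : INR k * g0 < D/9).
  { assert (INR k <= T / h).
    { apply Rle_trans with (T / r). lra. unfold Rdiv. apply Rmult_le_compat_l. lra.
      apply Rinv_le_contravar; lra. }
    assert (0 < T/h) by (apply Rdiv_lt_0_compat; lra).
    unfold g0. pose proof (pos_INR k).
    replace (INR k * (D / (9 * (T / h + 1)))) with (D/9 * (INR k / (T/h+1))) by (field; lra).
    rewrite <- (Rmult_1_r (D/9)) at 2. apply Rmult_lt_compat_l. lra.
    apply Rmult_lt_reg_r with (T/h+1). lra. unfold Rdiv at 1.
    rewrite Rmult_assoc, Rinv_l by lra. lra. }
  rewrite E in HwT. pose proof (d_tri w w' (phi (T - INR k * r) w')). unfold w' in *. lra.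
Qed.


Lemma P_global : metric_open d (Sing phi) ->
  exists h0, 0 < h0 /\ forall h, 0 < h <= h0 -> exists al, 0 < al /\
  forall z, ~ Sing phi z -> forall r, h <= Rabs r <= 3 * h -> al <= d z (phi r z).
Proof.
  intros Hop.
  destruct (choiceR (fun x rho => ~ Sing phi x -> exists hx, 0 < hx /\
    forall h, 0 < h <= hx -> exists al, 0 < al /\ forall w, d x w < rho ->
    forall r, h <= r <= 3 * h -> al <= d w (phi r w))) as [rho Hrho].
  { intros x. destruct (classic (Sing phi x)) as [S|S].
    exists 1. split. lra. tauto.
    destruct (P_local x S) as [r [Hr Hr']]. exists r. auto. }
  destruct (choiceR (fun x hx => ~ Sing phi x ->
    forall h, 0 < h <= hx -> exists al, 0 < al /\ forall w, d x w < rho x ->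
    forall r, h <= r <= 3 * h -> al <= d w (phi r w))) as [hx Hhx].
  { intros x. destruct (classic (Sing phi x)) as [S|S].
    exists 1. split. lra. tauto.
    destruct (proj2 (Hrho x) S) as [r [Hr Hr']]. exists r. auto. }
  destruct (cover_ball (Sing phi) rho) as [l [Hl1 Hl2]]; auto.
  { intros x _. apply Hrho. }
  destruct (finite_min (fun x m => m <= hx x) l) as [h0 [Hh0 Hh0l]].
  { intros; lra. } { intros x _. exists (hx x). split. apply Hhx. lra. }
  exists h0. split; auto. intros h Hh.
  destruct (finite_min (fun x m => forall w, d x w < rho x ->
    forall r, h <= r <= 3 * h -> m <= d w (phi r w)) l) as [al [Hal Hall]].
  { intros x m m' Hm H w Hw r Hr. specialize (H w Hw r Hr). lra. }
  { intros x Hx. apply (proj2 (Hhx x) (Hl1 x Hx)). specialize (Hh0l x Hx). lra. }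
  exists al. split; auto.
  assert (Hpos : forall z, ~ Sing phi z -> forall r, h <= r <= 3 * h -> al <= d z (phi r z)).
  { intros z Hz r Hr. destruct (Hl2 z) as [S|[x [Hx Hxz]]]. contradiction.
    apply (Hall x Hx z Hxz r Hr). }
  intros z Hz r Hr. destruct (Rle_or_lt 0 r) as [H0|H0].
  - rewrite Rabs_right in Hr by lra. apply Hpos; auto.
  - rewrite Rabs_left in Hr by lra.
    pose proof (Hpos (phi r z) (nonsing_inv r z Hz) (-r) Hr) as H.
    rewrite phi_inv, d_sym in H. exact H.
Qed.

Lemma part2 : singular_expansive d phi -> metric_open d (Sing phi) ->
  expansive_on d phi (fun x => ~ Sing phi x).
Proof.
  intros Hse Hop eps Heps.
  destruct (classic (exists z, ~ Sing phi z)) as [Hne|Hem].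
  2:{ exists 1. split. lra. intros x y s Hx. exfalso. apply Hem. eauto. }
  destruct (c_lower Hop Hne) as [c [Hc0 Hcl]].
  destruct (P_global Hop) as [h0 [Hh0 HP]].
  set (h1 := Rmin h0 (eps/3)).
  assert (Hh1 : 0 < h1) by (apply Rmin_glb_lt; lra).
  assert (Hh1a : h1 <= h0) by apply Rmin_l.
  assert (Hh1b : h1 <= eps/3) by apply Rmin_r.
  destruct (HP h1) as [al1 [Hal1 HP1]]. lra.
  destruct (Hse (h1/2)) as [dse [Hdse Hse']]. lra.
  set (eta := Rmin (dse * c) (al1/2)).
  assert (Heta : 0 < eta) by (apply Rmin_glb_lt; nra).
  assert (Heta1 : eta <= dse * c) by apply Rmin_l.
  assert (Heta2 : eta <= al1/2) by apply Rmin_r.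
  destruct (Lsmall (eta/2)) as [bL1 [HbL1 HL1]]. lra.
  set (h := Rmin h0 (Rmin (bL1/2) h1)).
  assert (Hh : 0 < h) by (apply Rmin_glb_lt; [lra|apply Rmin_glb_lt; lra]).
  assert (Hha : h <= h0) by apply Rmin_l.
  assert (Hhb : h <= bL1/2) by (eapply Rle_trans; [apply Rmin_r|apply Rmin_l]).
  assert (Hhc : h <= h1) by (eapply Rle_trans; [apply Rmin_r|apply Rmin_r]).
  destruct (HP h) as [al [Hal HPh]]. lra.
  destruct (Lsmall (al/3)) as [bL2 [HbL2 HL2]]. lra.
  set (u0 := Rmin (bL2/2) h).
  assert (Hu0 : 0 < u0) by (apply Rmin_glb_lt; lra).
  assert (Hu0a : u0 <= bL2/2) by apply Rmin_l.
  assert (Hu0b : u0 <= h) by apply Rmin_r.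
  destruct (HP (u0/3)) as [al' [Hal' HP']]. lra.
  destruct (UCT h (al'/3)) as [bU [HbU HU]]. lra.
  destruct (Lsmall (al'/3)) as [bL3 [HbL3 HL3]]. lra.
  set (del := Rmin (Rmin (eta/2) (al/4)) (Rmin (al'/4) (bU/2))).
  assert (Hdel : 0 < del) by (apply Rmin_glb_lt; apply Rmin_glb_lt; lra).
  assert (Hdel1 : del <= eta/2) by (eapply Rle_trans; [apply Rmin_l|apply Rmin_l]).
  assert (Hdel2 : del <= al/4) by (eapply Rle_trans; [apply Rmin_l|apply Rmin_r]).
  assert (Hdel3 : del <= al'/4) by (eapply Rle_trans; [apply Rmin_r|apply Rmin_l]).
  assert (Hdel4 : del <= bU/2) by (eapply Rle_trans; [apply Rmin_r|apply Rmin_r]).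
  exists del. split; auto.
  intros x y s Hx Hy Hs Hs0 Hcl0.
  assert (Kf : forall t t', d (phi (s t) y) (phi (s t') y) <= 2 * del + d (phi t x) (phi t' x)).
  { intros t t'. pose proof (Hcl0 t). pose proof (Hcl0 t').
    pose proof (d_tri (phi (s t) y) (phi t x) (phi (s t') y)).
    pose proof (d_tri (phi t x) (phi t' x) (phi (s t') y)).
    pose proof (d_sym (phi (s t) y) (phi t x)). lra. }
  assert (Kf2 : forall t t', d (phi t x) (phi t' x) <= 2 * del + d (phi (s t) y) (phi (s t') y)).
  { intros t t'. pose proof (Hcl0 t). pose proof (Hcl0 t').
    pose proof (d_tri (phi t x) (phi (s t) y) (phi t' x)).
    pose proof (d_tri (phi (s t) y) (phi (s t') y) (phi t' x)).
    pose proof (d_sym (phi t' x) (phi (s t') y)). lra. }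
  assert (Eshift : forall a b, phi b y = phi (b - a) (phi a y)).
  { intros a b. rewrite <- phiA. f_equal. ring. }
  assert (Eshiftx : forall a b, phi b x = phi (b - a) (phi a x)).
  { intros a b. rewrite <- phiA. f_equal. ring. }
  assert (Ky : forall t, ~ Sing phi (phi t y)) by (intros; apply nonsing_inv; auto).
  assert (Kx : forall t, ~ Sing phi (phi t x)) by (intros; apply nonsing_inv; auto).
  assert (CA : forall t u, 0 <= u <= u0 -> Rabs (s (t + u) - s t) < h).
  { intros t u Hu.
    apply (barrier (fun u => s (t + u) - s t) h 0 u).
    - intros v. apply continuity_pt_minus.
      + apply (continuity_pt_comp (fun u => t + u) s). apply continuity_pt_plus.
        apply continuity_pt_const. intros a b; auto. apply continuity_pt_id. apply Hs.
      + apply continuity_pt_const. intros a b; auto.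
    - auto.
    - rewrite Rplus_0_r, Rminus_diag, Rabs_R0. auto.
    - intros tau Htau [H1 H2]. rewrite Rmin_left, Rmax_right in Htau by lra.
      pose proof (HPh (phi (s t) y) (Ky _) (s (t + tau) - s t) (conj H1 H2)) as H3.
      rewrite <- Eshift in H3. pose proof (Kf t (t + tau)) as H4.
      rewrite (Eshiftx t (t + tau)) in H4.
      assert (H5 : d (phi t x) (phi (t + tau - t) (phi t x)) < al/3).
      { apply HL2. rewrite d_xx. auto. rewrite Rabs_right; lra. }
      lra. }
  assert (CB : forall t, bL3 <= s (t + u0) - s t).
  { intros t. set (F := s (t + u0) - s t).
    assert (FA : Rabs F < h) by (apply CA; lra).
    assert (Fl : bL3 <= Rabs F).
    { destruct (Rle_or_lt bL3 (Rabs F)) as [L|L]; auto. exfalso.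
      assert (H1 : d (phi (s t) y) (phi F (phi (s t) y)) < al'/3).
      { apply HL3. rewrite d_xx; auto. auto. }
      unfold F in H1. rewrite <- Eshift in H1.
      pose proof (Kf2 t (t + u0)) as H2. rewrite (Eshiftx t (t + u0)) in H2.
      assert (H3 : al' <= d (phi t x) (phi (t + u0 - t) (phi t x))).
      { apply HP'. auto. rewrite Rabs_right; lra. }
      lra. }
    destruct (Rle_or_lt 0 F) as [Fp|Fn].
    - rewrite Rabs_right in Fl; lra.
    - exfalso. rewrite Rabs_left in Fl by lra.
      destruct (ivt_gen (fun u => u + s t - s (t + u)) 0 u0 (2 * u0 / 3)) as [u [Hu Hru]].
      { intros v. apply continuity_pt_minus. apply continuity_pt_plus.
        apply continuity_pt_id. apply continuity_pt_const. intros a b; auto.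
        apply (continuity_pt_comp (fun u => t + u) s). apply continuity_pt_plus.
        apply continuity_pt_const. intros a b; auto. apply continuity_pt_id. apply Hs. }
      { rewrite Rplus_0_r. unfold F in *. nra. }
      rewrite Rmin_left, Rmax_right in Hu by lra. simpl in Hru.
      set (v := s t - s (t + u)).
      assert (Hv : Rabs v < h). { unfold v. rewrite Rabs_minus_sym. apply CA. lra. }
      set (p := phi t x). set (q := phi (s t) y).
      set (z := phi (-v) p).
      assert (Ez : phi (2 * u0 / 3) z = phi (t + u) x).
      { unfold z, p. rewrite <- !phiA. f_equal. unfold v. lra. }
      assert (Eq : phi (s (t + u)) y = phi (-v) q).
      { unfold q. rewrite <- phiA. f_equal. unfold v. ring. }
      assert (H1 : d (phi (-v) p) (phi (-v) q) < al'/3).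
      { apply HU. rewrite Rabs_Ropp. lra. pose proof (Hcl0 t). unfold p, q. lra. }
      pose proof (Hcl0 (t + u)) as H2. rewrite Eq in H2.
      assert (H3 : al' <= d z (phi (2 * u0 / 3) z)).
      { apply HP'. unfold z, p. apply nonsing_inv. apply Kx. rewrite Rabs_right; lra. }
      rewrite Ez in H3. pose proof (d_tri z (phi (-v) q) (phi (t + u) x)).
      pose proof (d_sym (phi (-v) q) (phi (t + u) x)). unfold z in *. lra. }
  set (sg := fun t => (RInt s 0 (t+u0) - RInt s 0 t)/u0).
  destruct (avg_props s u0 Hs Hu0) as [Hsgc [Hsgm Hsgl]].
  fold sg in Hsgc.
  assert (Hsgm' : forall t, Rabs (sg t - s t) < h).
  { intros t. destruct (Hsgm t) as [c0 [Hcc' Hcc'']]. unfold sg. rewrite Hcc''.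
    replace c0 with (t + (c0 - t)) by ring. apply CA. lra. }
  assert (Hhom : increasing_homeo sg).
  { apply (homeo_of_lin sg (bL3 / u0)); auto. apply Rdiv_lt_0_compat; lra.
    intros a b Hab. destruct (Hsgl a b Hab) as [c0 [_ Hcc]]. unfold sg. rewrite Hcc.
    pose proof (CB c0). apply Rmult_le_compat_r. lra.
    unfold Rdiv. apply Rmult_le_compat_r. left. apply Rinv_0_lt_compat. lra. lra. }
  assert (Hsgclose : forall t, d (phi t x) (phi (sg t) y) <= dse * Defs.dist d (phi t x) (Sing phi)).
  { intros t. pose proof (Hcl0 t).
    assert (H1 : d (phi (s t) y) (phi (sg t - s t) (phi (s t) y)) < eta/2).
    { apply HL1. rewrite d_xx; auto. specialize (Hsgm' t). lra. }
    rewrite <- Eshift in H1.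
    pose proof (d_tri (phi t x) (phi (s t) y) (phi (sg t) y)).
    pose proof (Hcl (phi t x) (Kx t)).
    apply Rle_trans with eta. lra. apply Rle_trans with (dse * c). auto.
    apply Rmult_le_compat_l; lra. }
  destruct (Hse' x y sg Hhom Hsgclose) as [t0 [u [Hu Hu']]].
  set (w0 := u - sg t0).
  assert (Ey : y = phi w0 x).
  { unfold w0. rewrite <- (phi_inv (sg t0) y). rewrite Hu'. rewrite <- phiA. f_equal. ring. }
  set (g := fun t => sg t + w0 - t).
  assert (Hg : forall t, phi (sg t) y = phi (g t) (phi t x)).
  { intros t. rewrite Ey, <- !phiA. f_equal. unfold g. ring. }
  assert (Hg0 : Rabs (g 0) < h1).
  { apply (barrier g h1 t0 0).
    - intros v. unfold g. apply continuity_pt_minus. apply continuity_pt_plus.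
      apply Hsgc. apply continuity_pt_const. intros a b; auto. apply continuity_pt_id.
    - auto.
    - unfold g, w0. replace (sg t0 + (u - sg t0) - t0) with (u - t0) by ring.
      apply Rabs_def1; lra.
    - intros tau _ [H1 H2].
      pose proof (HP1 (phi tau x) (Kx tau) (g tau) (conj H1 H2)) as H3.
      rewrite <- Hg in H3. pose proof (Hsgclose tau).
      pose proof (Hcl0 tau).
      assert (H4 : d (phi (s tau) y) (phi (sg tau - s tau) (phi (s tau) y)) < eta/2).
      { apply HL1. rewrite d_xx; auto. specialize (Hsgm' tau). lra. }
      rewrite <- Eshift in H4.
      pose proof (d_tri (phi tau x) (phi (s tau) y) (phi (sg tau) y)). lra. }
  assert (Hsg0 : Rabs (sg 0) < h) by (pose proof (Hsgm' 0); rewrite Hs0, Rminus_0_r in H; auto).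
  exists w0. split; [|exact Ey].
  unfold g in Hg0. rewrite Rminus_0_r in Hg0.
  apply Rabs_def2 in Hg0. apply Rabs_def2 in Hsg0. lra.
Qed.

End Basics.

Theorem mainTheorem14 (X : Type) (d : X -> X -> R) (phi : R -> X -> X)
  (Hd : is_metric d) (Hc : metric_compact d) (Hphi : is_flow d phi) :
  (expansive_on d phi (fun x => ~ Sing phi x) -> singular_expansive d phi) /\
  (singular_expansive d phi -> metric_open d (Sing phi) ->
     expansive_on d phi (fun x => ~ Sing phi x)).
Proof.
  split.
  - apply (part1 X d phi Hd Hc Hphi).
  - apply (part2 X d phi Hd Hc Hphi).
Qed.
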